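(* Let $r\geq 2$ and let $X$ be a rose with $r$ petals, with $F\cong\pi_1(X,x_0)$ the free group on the generators $\alpha_1,\ldots,\alpha_r$ corresponding to the oriented petals. Let $Z$ be a finite, non-empty, connected graph and let $Z\to X$ be an immersion that is not a covering map. Then the immersion factors as $Z\hookrightarrow Y\to X$, where $Z$ is a subgraph of $Y$, $Y$ is a finite connected graph, $Y\to X$ is a finite-sheeted (combinatorial) covering map, and the image of the resulting homomorphism $F\to\mathrm{Sym}(V(Y))$ (given by the action of $F$ on the vertex set $V(Y)$ of $Y$ by path lifting) is the full symmetric group $\mathrm{Sym}(V(Y))$.
   Context: A rose with $r$ petals is a graph with exactly one vertex $x_0$ and $r$ edges; each edge is oriented and labelled by a generator $\alpha_i$, giving $\pi_1(X,x_0)\cong F$ free on $\alpha_1,\dots,\alpha_r$. A combinatorial map of graphs $Y\to X$ (sending vertices to vertices and edges to edges) is equivalent to an orientation and labelling of the edges of $Y$ by $\alpha_1,\ldots,\alpha_r$. It is an immersion if it is injective on links of vertices, equivalently if at every vertex of $Y$ and for every label $\alpha_i$ there is at most one incoming and at most one outgoing edge labelled $\alpha_i$; it is a covering map if it is bijective on links of vertices, equivalently if at every vertex there is exactly one incoming and exactly one outgoing edge labelled $\alpha_i$ for each $i$. For a covering $Y\to X$, $F$ acts on the vertices of $Y$ by path lifting: for a vertex $y$ and $\gamma\in F$ viewed as a loop at $x_0$, $\gamma.y$ is the endpoint of the unique lift of $\gamma$ starting at $y$; concretely, $\alpha_i$ sends $u$ to $v$ when there is an edge labelled $\alpha_i$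 oriented from $u$ to $v$. *)

(* Defs.v *)
From mathcomp Require Import all_boot all_fingroup.
Set Implicit Arguments. Unset Strict Implicit. Unset Printing Implicit Defensive.

(* A finite graph together with a combinatorial map to the rose X with r petals,
   i.e. an orientation (src/tgt) and a labelling of the edges by alpha_1..alpha_r
   (labels are 'I_r). *)
Record lgraph (r : nat) := LGraph {
  vert : finType;
  edge : finType;
  src : edge -> vert;
  tgt : edge -> vert;
  lab : edge -> 'I_r }.

Arguments src {r G} e : rename.
Arguments tgt {r G} e : rename.
Arguments lab {r G} e : rename.

Definition immersion r (G : lgraph r) : Prop :=
  (forall e1 e2 : edge G, src e1 = src e2 -> lab e1 = lab e2 -> e1 = e2) /\
  (forall e1 e2 : edge G, tgt e1 = tgt e2 -> lab e1 = lab e2 -> e1 = e2).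

Definition covering r (G : lgraph r) : Prop :=
  forall (v : vert G) (i : 'I_r),
    (exists! e : edge G, src e = v /\ lab e = i) /\
    (exists! e : edge G, tgt e = v /\ lab e = i).

Definition adj r (G : lgraph r) : rel (vert G) := fun u v =>
  [exists e : edge G, ((src e == u) && (tgt e == v)) || ((src e == v) && (tgt e == u))].

Definition connected r (G : lgraph r) : Prop :=
  forall u v : vert G, connect (@adj r G) u v.

(* (f, g) embeds Z as a subgraph of Y, compatibly with the maps to X
   (so the map Z -> X factors as Z -> Y -> X). *)
Definition subgraph_emb r (Z Y : lgraph r) (f : vert Z -> vert Y) (g : edge Z -> edge Y) : Prop :=
  [/\ injective f, injective g,
      forall e, src (g e) = f (src e),
      forall e, tgt (g e) = f (tgt e) &
      forall e, lab (g e) = lab e].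

(* sigma : 'I_r -> {perm V(Y)} is the action of the generators alpha_i by path lifting:
   alpha_i sends u to v when there is an edge labelled alpha_i from u to v. *)
Definition lifting_action r (Y : lgraph r) (sigma : 'I_r -> {perm vert Y}) : Prop :=
  forall e : edge Y, sigma (lab e) (src e) = tgt e.

(* Main.v *)
Require Import Defs.
From Stdlib Require Import Lia.
From mathcomp Require Import all_boot all_fingroup.
Set Implicit Arguments. Unset Strict Implicit. Unset Printing Implicit Defensive.
Import GroupScope.

Section Crit.
Variable T : finType.
Variable G : {group {perm T}}.
Variables x0 y0 : T.
Let t0 := tperm x0 y0.
Definition lnk a b := (a == b) || (tperm a b * t0 \in G).

Lemma lnk_sym a b : lnk a b -> lnk b a.
Proof. by rewrite /lnk eq_sym tpermC. Qed.

Lemma lnk_trans a b c : lnk a b -> lnk b c -> lnk a c.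
Proof.
rewrite /lnk.
have [->|nab] := eqVneq a b; first by [].
have [->|nbc] := eqVneq b c; first by move=> /= H _; rewrite H orbT.
have [->|nac] := eqVneq a c; first by [].
move=> /= Hab Hbc.
have -> : tperm a c = tperm a b * tperm b c * tperm a b.
  have := tpermJ b c (tperm a b); rewrite tpermR tpermD 1?(eq_sym c) // => <-.
  by rewrite /conjg tpermV mulgA.
have E : tperm a b * tperm b c * tperm a b * t0 =
   (tperm a b * t0) * (t0 * tperm b c) * (tperm a b * t0).
  by rewrite /t0 -!mulgA (mulgA (tperm x0 y0)) tperm2 mul1g.
have H2 : t0 * tperm b c = (tperm b c * t0)^-1 by rewrite invMg /t0 !tpermV.
rewrite /= E H2; apply: groupM; [apply: groupM|]; rewrite ?groupV //.
Qed.

Lemma conj_lnk g a b : g \in G -> tperm (g x0) (g y0) * t0 \in G ->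
  lnk a b -> lnk (g a) (g b).
Proof.
move=> Gg H; rewrite /lnk; case/orP=> [/eqP->|Hab]; first by rewrite eqxx.
apply/orP; right.
have -> : tperm (g a) (g b) * t0 = (tperm a b * t0) ^ g * (tperm (g x0) (g y0) * t0).
  by rewrite conjMg /t0 !tpermJ -mulgA (mulgA (tperm (g x0) (g y0))) tperm2 mul1g.
by rewrite groupM // groupJ.
Qed.

Lemma crit (U0 : {set T}) : x0 != y0 ->
  (forall u, u \in U0 -> lnk x0 u) ->
  #|T| + 2 <= 2 * #|U0| ->
  (forall v, exists2 g, g \in G & g x0 = v) ->
  (exists2 o, o \in G & odd_perm o) ->
  (G : {set {perm T}}) = [set: {perm T}].
Proof.
move=> nxy HU cardU trans [o Go oddo].
have S1 : forall g, g \in G -> (tperm (g x0) (g y0) * t0 \in G) /\ lnk x0 (g x0).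
  move=> g Gg.
  have : 1 < #|g @: U0 :&: U0|.
    have := cardsUI (g @: U0) U0; rewrite card_imset; last exact: perm_inj.
    have h1 := max_card (g @: U0 :|: U0).
    move=> h2; rewrite ltnNge; apply/negP=> h3.
    have := leq_add h1 h3; rewrite h2 addnn -mul2n => h4.
    by have := leq_trans cardU h4; rewrite leq_add2l.
  case/card_gt1P=> u [w [/setIP[/imsetP[u' Uu' ->] Uu] /setIP[/imsetP[w' Uw' ->] Uw] nuw]].
  have luw' : lnk u' w' := lnk_trans (lnk_sym (HU _ Uu')) (HU _ Uw').
  have luw : lnk (g u') (g w') := lnk_trans (lnk_sym (HU _ Uu)) (HU _ Uw).
  have nuw' : u' != w' by apply: contraNneq nuw => ->.
  move: luw' luw; rewrite /lnk (negbTE nuw) (negbTE nuw') /= => h1 h2.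
  have h3 : (tperm u' w' * t0) ^ g \in G by rewrite groupJ.
  rewrite conjMg /t0 !tpermJ in h3.
  have h4 : tperm (g x0) (g y0) * t0 = (tperm (g u') (g w') * tperm (g x0) (g y0))^-1 * (tperm (g u') (g w') * t0).
    by rewrite invMg !tpermV -mulgA (mulgA (tperm (g u') _)) tperm2 mul1g.
  have h5 : tperm (g x0) (g y0) * t0 \in G by rewrite h4 groupM ?groupV.
  split=> //.
  have := conj_lnk Gg h5 (HU _ Uu') => h6.
  exact: lnk_trans (HU _ Uu) (lnk_sym h6).
have S2 : forall a b, lnk a b.
  move=> a b; have [ga Ga <-] := trans a; have [gb Gb <-] := trans b.
  exact: lnk_trans (lnk_sym (S1 _ Ga).2) (S1 _ Gb).2.
have S3 : forall a b, tperm a b * t0 \in G \/ a = b.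
  move=> a b; have := S2 a b; rewrite /lnk; case/orP=> [/eqP->|]; by [right|left].
have S4 : t0 \in G.
  have [ts def_o dts] := prod_tpermP o.
  have P : forall ts, all dpair ts ->
    (if odd (size ts) then t0 * \prod_(t <- ts) tperm t.1 t.2 else \prod_(t <- ts) tperm t.1 t.2) \in G.
    elim=> [|t ts' IH] /=; first by rewrite big_nil group1.
    case/andP=> dt dts'; rewrite big_cons.
    have Ht : tperm t.1 t.2 * t0 \in G.
      by case: (S3 t.1 t.2) => // e; rewrite /dpair /= e eqxx in dt.
    set Q := \prod_(_ <- ts') _.
    move: (IH dts'); case: (odd (size ts')) => /= H.
      have -> : tperm t.1 t.2 * Q = (tperm t.1 t.2 * t0) * (t0 * Q).
        by rewrite -mulgA (mulgA t0) /t0 tperm2 mul1g.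
      by rewrite groupM.
    have -> : t0 * (tperm t.1 t.2 * Q) = (tperm t.1 t.2 * t0)^-1 * Q.
      by rewrite invMg /t0 !tpermV mulgA.
    by rewrite groupM ?groupV.
  have := P ts dts; rewrite -def_o -(odd_perm_prod dts) -def_o oddo => H.
  by rewrite -(mulgK o t0) groupM ?groupV.
apply/eqP; rewrite eqEsubset subsetT /= -(gen_tperm x0) gen_subG.
apply/subsetP=> _ /imsetP[y _ ->].
case: (S3 x0 y) => [H|->]; last by rewrite tperm1 group1.
by rewrite -(mulgK t0 (tperm x0 y)) /t0 tpermV groupM.
Qed.
End Crit.

Lemma inj_surj (T : finType) (h : T -> T) : injective h -> forall a, exists b, h b = a.
Proof.
move=> hi a; exists ((perm hi)^-1 a).
by have := permKV (perm hi) a; rewrite permE.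
Qed.

Lemma pinj_surj (T : finType) (p : T -> option T) :
  (forall x y z, p x = Some z -> p y = Some z -> x = y) ->
  (forall x, p x != None) -> forall z, exists x, p x = Some z.
Proof.
move=> pi tot z.
have fi : injective (fun x => odflt x (p x)).
  move=> x y; case ex: (p x) (tot x) => [u|] // _; case ey: (p y) (tot y) => [v|] // _ /= euv.
  by apply: (pi x y u) => //; rewrite ey euv.
have [x hx] := inj_surj fi z; exists x; move: hx (tot x); case: (p x) => //= u -> //.
Qed.

Lemma ext_perm (T : finType) (p : T -> option T) :
  (forall x y z, p x = Some z -> p y = Some z -> x = y) ->
  {s : {perm T} | forall x z, p x = Some z -> s x = z}.
Proof.
move: {2}#|[set x | p x == None]| (leqnn #|[set x | p x == None]|) => k.
elim: k p => [|k IH] p Hk pi.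
  have tot : forall x, p x != None.
    move=> x; apply/negP=> /eqP e.
    have H0 : 0 < #|[set x | p x == None]| by apply/card_gt0P; exists x; rewrite inE e.
    by rewrite leqn0 in Hk; rewrite (eqP Hk) in H0.
  have fi : injective (fun x => odflt x (p x)).
    move=> x y; case ex: (p x) (tot x) => [u|] // _; case ey: (p y) (tot y) => [v|] // _ /= euv.
    by apply: (pi x y u) => //; rewrite ey euv.
  by exists (perm fi) => x z e; rewrite permE e.
case: (pickP (fun x => p x == None)) => [a /eqP pa|none]; last first.
  have fi : injective (fun x => odflt x (p x)).
    move=> x y; case ex: (p x) (none x) => [u|] // _; case ey: (p y) (none y) => [v|] // _ /= euv.
    by apply: (pi x y u) => //; rewrite ey euv.
  by exists (perm fi) => x z e; rewrite permE e.
have [b hb] : {b | forall x, p x != Some b}.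
  case: (pickP (fun b => [forall x, p x != Some b])) => [b /forallP hb|nob].
    by exists b.
  have h : forall b, exists x, p x == Some b.
    by move=> b; have := nob b; move/negbT; rewrite negb_forall => /existsP[x]; rewrite negbK; exists x.
  pose hh b := odflt a [pick x | p x == Some b].
  have hhP : forall b, p (hh b) = Some b.
    move=> b; rewrite /hh; case: pickP => [x /eqP //|none].
    by have [x] := h b; rewrite none.
  have hhi : injective hh by move=> b1 b2 e; apply: Some_inj; rewrite -!hhP e.
  exfalso; have [b hb] := inj_surj hhi a.
  by have := hhP b; rewrite hb pa.
pose p' x := if x == a then Some b else p x.
have pi' : forall x y z, p' x = Some z -> p' y = Some z -> x = y.
  move=> x y z; rewrite /p'.
  case: eqP => [->|nxa]; case: eqP => [->|nya] //.
  - by move=> [e1] e; have := hb y; rewrite e e1 eqxx.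
  - by move=> e [e1]; have := hb x; rewrite e e1 eqxx.
  - exact: pi.
have Hk' : #|[set x | p' x == None]| <= k.
  have sub : [set x | p' x == None] \proper [set x | p x == None].
    apply/properP; split.
      by apply/subsetP=> x; rewrite !inE /p'; case: (x == a).
    by exists a; rewrite !inE /p' ?eqxx ?pa.
  by rewrite -ltnS; apply: leq_trans (proper_card sub) Hk.
have [s hs] := IH p' Hk' pi'.
exists s => x z e; apply: hs; rewrite /p'; case: eqP => [exa|//].
by rewrite exa pa in e.
Qed.

Section ZS.
Variables (r : nat) (Z : lgraph r).
Hypothesis Zimm : immersion Z.

Definition pZ (i : 'I_r) (z : vert Z) : option (vert Z) :=
  omap (@tgt r Z) [pick e | (src e == z) && (lab e == i)].

Lemma pZ_edge e : pZ (lab e) (src e) = Some (tgt e).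
Proof.
rewrite /pZ; case: pickP => [e' /andP[/eqP s /eqP l]|none] /=.
  by rewrite (Zimm.1 e' e s l).
by have := none e; rewrite !eqxx.
Qed.

Lemma pZ_SomeP i z u : pZ i z = Some u -> exists e, [/\ src e = z, lab e = i & tgt e = u].
Proof.
rewrite /pZ; case: pickP => [e' /andP[/eqP s /eqP l]|//] /= [<-].
by exists e'.
Qed.

Lemma pZ_inj i x y z : pZ i x = Some z -> pZ i y = Some z -> x = y.
Proof.
move=> /pZ_SomeP[e1 [<- l1 t1]] /pZ_SomeP[e2 [<- l2 t2]].
by rewrite (Zimm.2 e1 e2) // ?t1 ?t2 ?l1 ?l2.
Qed.

Definition piZ i : {perm vert Z} := sval (ext_perm (@pZ_inj i)).

Lemma piZ_edge e : piZ (lab e) (src e) = tgt e.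
Proof. by rewrite /piZ; case: ext_perm => s /= H; apply: H; exact: pZ_edge. Qed.

Lemma noncover : ~ covering Z -> exists i a, pZ i a = None.
Proof.
move=> ncov; case: (boolP [exists i, [exists a, pZ i a == None]]).
  by case/existsP=> i /existsP[a /eqP e]; exists i, a.
rewrite negb_exists => /forallP tot; exfalso; apply: ncov => v i.
have toti : forall a, pZ i a != None.
  by move=> a; have := tot i; rewrite negb_exists => /forallP/(_ a).
split.
  case e: (pZ i v) (toti v) => [u|//] _.
  have [e0 [s0 l0 _]] := pZ_SomeP e.
  exists e0; split=> // e' [s' l']; apply: Zimm.1; by rewrite ?s0 ?s' ?l0 ?l'.
have [x hx] := pinj_surj (@pZ_inj i) toti v.
have [e0 [_ l0 t0]] := pZ_SomeP hx.
exists e0; split=> // e' [t' l']; apply: Zimm.2; by rewrite ?t0 ?t' ?l0 ?l'.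
Qed.
End ZS.

Lemma orbit_fix (T : finType) (s : {perm T}) (W : {set T}) v m :
  v \in W -> (forall u, u \in W -> s u \in W) -> #|W| <= m -> (s ^+ m`!) v = v.
Proof.
move=> Wv Ws Wm.
have sub : porbit s v \subset W.
  apply/subsetP=> y /porbitP[i ->]; elim: i => [|i IH]; first by rewrite expg0 perm1.
  by rewrite expgSr permM Ws.
have p0 : 0 < #|porbit s v| by rewrite lt0n card_porbit_neq0.
have : #|porbit s v| %| m`!.
  by apply: dvdn_fact; rewrite p0 (leq_trans (subset_leq_card sub) Wm).
case/dvdnP=> q ->; rewrite mulnC expgM; apply: permX_fix.
by rewrite permX iter_porbit.
Qed.

Lemma iter_on (T U : finType) (s : {perm T}) (d : U -> T) (f : U -> U) :
  (forall i, s (d i) = d (f i)) -> forall t i, (s ^+ t) (d i) = d (iter t f i).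
Proof.
move=> H; elim=> [|t IH] i; first by rewrite expg0 perm1.
by rewrite expgSr permM IH H.
Qed.

Lemma val_iter_ordS n (i : 'I_n) t : val (iter t (@ordS n) i) = (i + t) %% n.
Proof.
elim: t => [|t IH]; first by rewrite addn0 modn_small.
by rewrite iterS /= IH -addn1 modnDml addn1 addnS.
Qed.

Lemma iter_ordS_n n (i : 'I_n) : iter n (@ordS n) i = i.
Proof. by apply: val_inj; rewrite val_iter_ordS modnDr modn_small. Qed.

Lemma tpE (T : finType) (x y z : T) :
  tperm x y z = if z == x then y else if z == y then x else z.
Proof. by case: tpermP => [->|->|/eqP/negbTE-> /eqP/negbTE->]; rewrite ?eqxx //; case: eqP. Qed.

Lemma ordS_eq0 K (i : 'I_K.+1) : (ordS i == ord0) = (i == ord_max).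
Proof.
apply/eqP/eqP=> [e|->]; apply: val_inj => /=.
  move: e => /(congr1 (@nat_of_ord _)) /=; have := ltn_ord i; rewrite ltnS leq_eqVlt.
  by case/orP=> [/eqP->//|lt]; rewrite modn_small.
by rewrite modnn.
Qed.

Section GY.
Variable r : nat.
Variable V : finType.
Variable sig : 'I_r -> {perm V}.

Definition gY : lgraph r := @LGraph r V (prod V 'I_r) fst (fun e => sig e.2 e.1) snd.

Lemma gY_adj u i : @adj r gY u (sig i u).
Proof. by apply/existsP; exists (u, i); rewrite /= !eqxx. Qed.

Lemma gY_adj_sym : symmetric (@adj r gY).
Proof.
move=> u v; apply/existsP/existsP=> [] [e He]; exists e; by rewrite orbC.
Qed.

Lemma gY_conn_iter u i t : connect (@adj r gY) u ((sig i ^+ t) u).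
Proof.
elim: t => [|t IH]; first by rewrite expg0 perm1 connect0.
apply: connect_trans IH _; rewrite expgSr permM; apply: connect1; exact: gY_adj.
Qed.

Lemma gY_conn_trans : connected gY ->
  forall u v, exists2 g, g \in <<[set sig i | i : 'I_r]>> & g u = v.
Proof.
move=> conn u v; have := conn u v => /connectP[p pth ->] {v}.
elim: p u pth => [|y p IH] u /=; first by exists 1; rewrite ?group1 ?perm1.
case/andP=> /existsP[[z i] /= He] /IH[g Gg <-].
have Gs : sig i \in <<[set sig i | i : 'I_r]>> by apply: mem_gen; apply: imset_f.
case/orP: He => /andP[/eqP ez /eqP ey]; subst.
  by exists (sig i * g); rewrite ?groupM // permM.
by exists ((sig i)^-1 * g); rewrite ?groupM ?groupV // permM permK.
Qed.

Lemma gY_cover : covering gY.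
Proof.
move=> v i; split.
  exists (v, i); split=> // [[z k]] /= [-> ->] //.
exists ((sig i)^-1 v, i); split; first by rewrite /= permKV.
by move=> [z k] /= [<- ->]; rewrite permK.
Qed.

Lemma gY_lift : @lifting_action r gY sig.
Proof. by []. Qed.
End GY.

Section Constr.
Variables (r : nat) (Z : lgraph r).
Hypothesis Zimm : immersion Z.
Variables (i0 j : 'I_r) (a : vert Z).
Hypothesis pa : pZ i0 a = None.
Hypothesis nij : j != i0.

Let n := #|vert Z|.
Let K := (n+5)`!.
Let m := ((n+4)`!).-1.
Definition VV := (vert Z + ('I_K.+1 + 'I_m.+1))%type.
Local Notation cc i := (inr (inl i) : VV).
Local Notation dd k := (inr (inr k) : VV).
Local Notation c0 := (cc ord0).
Local Notation cm1 := (cc ord_max).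
Local Notation e0 := (dd ord0).
Local Notation w := (dd ord_max).
Local Notation d1 := (dd (inord 1)).
Local Notation d2 := (dd (inord 2)).

Lemma mE : m.+1 = (n+4)`!.
Proof. by rewrite prednK // fact_gt0. Qed.

Lemma m_ge3 : 3 <= m.
Proof.
rewrite -ltnS mE; apply: leq_trans (leq_fact (_ : 4 <= n + 4)) => //.
by rewrite addnC leq_addr.
Qed.

Definition liftL_fun (p : {perm vert Z}) (v : VV) : VV :=
  match v with inl z => inl (p z) | inr f => inr f end.
Lemma liftL_inj p : injective (liftL_fun p).
Proof. by apply: (@can_inj _ _ _ (liftL_fun p^-1)) => [[z|f]] /=; rewrite ?permK. Qed.
Definition liftL p := perm (@liftL_inj p).

Definition cycC_fun (v : VV) : VV :=
  match v with inr (inl i) => cc (ordS i) | _ => v end.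
Lemma cycC_inj : injective cycC_fun.
Proof.
apply: (@can_inj _ _ _ (fun v => match v with inr (inl i) => cc (ord_pred i) | _ => v end)).
by move=> [z|[i|k]] //=; rewrite ordSK.
Qed.
Definition cycC := perm cycC_inj.

Definition Sd_fun (v : VV) : VV :=
  match v with inr (inr k) => dd (ordS k) | _ => v end.
Lemma Sd_inj : injective Sd_fun.
Proof.
apply: (@can_inj _ _ _ (fun v => match v with inr (inr k) => dd (ord_pred k) | _ => v end)).
by move=> [z|[i|k]] //=; rewrite ordSK.
Qed.
Definition Sd := perm Sd_inj.
Definition cycD := Sd * tperm c0 e0.

Let pi := piZ Zimm.
Definition s0base := liftL (pi i0) * cycC * tperm (inl (pi i0 a)) e0.
Definition bpar := ~~ odd_perm s0base.
Definition s0 := s0base * (if bpar then tperm d1 d2 else 1).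
Definition sj := liftL (pi j) * cycD.
Definition sgm i := if i == i0 then s0 else if i == j then sj else liftL (pi i).

Lemma s0_odd : odd_perm s0.
Proof.
rewrite /s0 odd_permM /bpar; case: (odd_perm s0base) => /=.
  by rewrite odd_perm1.
rewrite odd_tperm /=; apply/negP => /eqP [] /(congr1 (@nat_of_ord _)).
have h3 := m_ge3.
by rewrite /= !inordK // ltnS; apply: leq_trans h3.
Qed.


Lemma in1 : nat_of_ord (inord 1 : 'I_m.+1) = 1%N.
Proof. by rewrite inordK // ltnS; apply: leq_trans m_ge3. Qed.
Lemma in2 : nat_of_ord (inord 2 : 'I_m.+1) = 2%N.
Proof. by rewrite inordK // ltnS; apply: leq_trans m_ge3. Qed.
Lemma o01 : (ord0 == inord 1 :> 'I_m.+1) = false.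
Proof. by apply/negbTE/eqP => /(congr1 (@nat_of_ord _)); rewrite in1. Qed.
Lemma o02 : (ord0 == inord 2 :> 'I_m.+1) = false.
Proof. by apply/negbTE/eqP => /(congr1 (@nat_of_ord _)); rewrite in2. Qed.
Lemma o12 : (inord 1 == inord 2 :> 'I_m.+1) = false.
Proof. by apply/negbTE/eqP => /(congr1 (@nat_of_ord _)); rewrite in1 in2. Qed.
Lemma o0m : (ord0 == ord_max :> 'I_m.+1) = false.
Proof. by apply/negbTE/eqP => /(congr1 (@nat_of_ord _)) /= e; have := m_ge3; rewrite -e. Qed.
Lemma o21 : (inord 2 == inord 1 :> 'I_m.+1) = false. Proof. by rewrite eq_sym o12. Qed.
Lemma o10 : (inord 1 == ord0 :> 'I_m.+1) = false. Proof. by rewrite eq_sym o01. Qed.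
Lemma o20 : (inord 2 == ord0 :> 'I_m.+1) = false. Proof. by rewrite eq_sym o02. Qed.
Lemma om0 : (ord_max == ord0 :> 'I_m.+1) = false. Proof. by rewrite eq_sym o0m. Qed.
Lemma K_gt0 : 0 < K. Proof. exact: fact_gt0. Qed.
Lemma oC0m : (ord0 == ord_max :> 'I_K.+1) = false.
Proof. by apply/negbTE/eqP => /(congr1 (@nat_of_ord _)) /= e; have := K_gt0; rewrite -e. Qed.

Lemma inlE (x y : vert Z) : (inl x == inl y :> VV) = (x == y).
Proof. by apply/eqP/eqP => [[]|->]. Qed.
Lemma ccE (x y : 'I_K.+1) : (cc x == cc y) = (x == y).
Proof. by apply/eqP/eqP => [[]|->]. Qed.
Lemma ddE (x y : 'I_m.+1) : (dd x == dd y) = (x == y).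
Proof. by apply/eqP/eqP => [[]|->]. Qed.

Lemma oCm0 : (ord_max == ord0 :> 'I_K.+1) = false. Proof. by rewrite eq_sym oC0m. Qed.
Lemma lrE x y : (inl x == inr y :> VV) = false. Proof. by []. Qed.
Lemma rlE x y : (inr y == inl x :> VV) = false. Proof. by []. Qed.
Lemma cdE x y : (cc x == dd y) = false. Proof. by []. Qed.
Lemma dcE x y : (dd y == cc x) = false. Proof. by []. Qed.
Ltac vs := do 3 (rewrite ?tpE /= ?inlE ?ccE ?ddE ?lrE ?rlE ?cdE ?dcE ?eqxx ?o01 ?o02 ?o12 ?o0m ?oC0m ?o21 ?o10 ?o20 ?om0 ?oCm0 ?orbT ?orbF ?ordS_eq0 /=).

Lemma s0E v : s0 v = (fun x => if bpar then tperm d1 d2 x else x)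
   (tperm (inl (pi i0 a)) e0 (cycC_fun (liftL_fun (pi i0) v))).
Proof.
rewrite /s0 /s0base !permM /liftL /cycC (permE (@liftL_inj _)) (permE cycC_inj).
by case: bpar; rewrite ?perm1.
Qed.

Lemma sjE v : sj v = tperm c0 e0 (Sd_fun (liftL_fun (pi j) v)).
Proof. by rewrite /sj /cycD !permM /liftL /Sd (permE (@liftL_inj _)) (permE Sd_inj). Qed.

Lemma cycDE v : cycD v = tperm c0 e0 (Sd_fun v).
Proof. by rewrite /cycD !permM /Sd (permE Sd_inj). Qed.

Lemma s0_inl z : z != a -> s0 (inl z) = inl (pi i0 z).
Proof.
move=> nza; rewrite s0E /= [tperm (inl _) _ _]tpE inlE (inj_eq perm_inj) (negbTE nza).
by case: bpar; rewrite /= ?tpE.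
Qed.

Lemma s0_a : s0 (inl a) = e0.
Proof. by rewrite s0E /= [tperm (inl _) _ _]tpE eqxx; case: bpar; rewrite /= ?tpE ?ddE ?o01 ?o02. Qed.

Lemma s0_e0 : s0 e0 = inl (pi i0 a).
Proof. by rewrite s0E /= [tperm (inl _) _ _]tpE; case: bpar; vs. Qed.

Lemma s0_cc i : s0 (cc i) = cc (ordS i).
Proof. by rewrite s0E /= [tperm (inl _) _ _]tpE /=; case: bpar; rewrite /= ?tpE. Qed.

Lemma s0_dd k : k != ord0 -> s0 (dd k) = (fun x => if bpar then tperm d1 d2 x else x) (dd k).
Proof. by move=> nk0; rewrite s0E /= [tperm (inl _) _ _]tpE; vs; rewrite (negbTE nk0). Qed.

Lemma sj_inl z : sj (inl z) = inl (pi j z).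
Proof. by rewrite sjE /= tpE. Qed.

Lemma sj_inr v : (if v is inl _ then false else true) -> sj v = cycD v.
Proof. by case: v => // f _; rewrite sjE cycDE. Qed.


Lemma cycC_cc i : cycC (cc i) = cc (ordS i).
Proof. by rewrite /cycC permE. Qed.
Lemma cycC_inl z : cycC (inl z) = inl z.
Proof. by rewrite /cycC permE. Qed.
Lemma cycC_dd k : cycC (dd k) = dd k.
Proof. by rewrite /cycC permE. Qed.

Lemma sgm_ext e : sgm (lab e) (inl (src e)) = inl (tgt e).
Proof.
rewrite /sgm; case: eqP => [li|_].
  rewrite s0_inl; first by rewrite /pi -li piZ_edge.
  apply/eqP=> ea; have := pZ_edge Zimm e; rewrite ea li pa //.
case: eqP => [lj|_]; first by rewrite sj_inl /pi -lj piZ_edge.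
by rewrite /liftL permE /= piZ_edge.
Qed.

Lemma card_inl : #|[set (inl z : VV) | z : vert Z]| = n.
Proof. by rewrite card_imset ?cardsT // => x y []. Qed.

Lemma s0K v : cycC ((s0 ^+ K) v) = v.
Proof.
pose W1 : {set VV} := e0 |: [set (inl z : VV) | z : vert Z].
have W1c : forall u, u \in W1 -> s0 u \in W1.
  move=> u; rewrite !inE => /orP[/eqP->|/imsetP[z _ ->]].
    by rewrite s0_e0 imset_f ?orbT.
  have [->|nza] := eqVneq z a; first by rewrite s0_a eqxx.
  by rewrite s0_inl // imset_f ?orbT.
have W1n' : #|W1| <= n + 5.
  apply: leq_trans (_ : 1 + n <= _); last by rewrite addnC leq_add2l.
  by rewrite cardsU1 card_inl leq_add2r leq_b1.
pose W2 : {set VV} := [set d1; d2].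
have W2c : forall u, u \in W2 -> s0 u \in W2.
  move=> u; rewrite !inE => /orP[]/eqP->; rewrite s0_dd ?(eq_sym _ ord0) ?o01 ?o02 //;
  by rewrite /=; case: bpar; vs; rewrite ?eqxx.
have W2n : #|W2| <= n + 5.
  by apply: leq_trans (leq_addl n 5); rewrite cards2; case: (_ != _).
case: v => [z|[i|k]].
- rewrite (orbit_fix (W := W1)) ?cycC_inl //.
  by rewrite !inE imset_f ?orbT.
- rewrite (iter_on (d := fun i => cc i) (f := @ordS _)) ?cycC_cc.
    by rewrite -iterS iter_ordS_n.
  exact: s0_cc.
have [->|nk0] := eqVneq k ord0.
  by rewrite (orbit_fix (W := W1)) ?cycC_dd // !inE eqxx.
case: (boolP (dd k \in W2)) => kW2.
  by rewrite (orbit_fix (W := W2)) ?cycC_dd.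
rewrite permX_fix ?cycC_dd // s0_dd //.
by move: kW2; rewrite !inE; case: bpar; vs => // /norP[/negbTE-> /negbTE->].
Qed.

Definition delta (i : 'I_m.+2) : VV := if nat_of_ord i is k.+1 then dd (inord k) else c0.

Lemma cycD_c0 : cycD c0 = e0.
Proof. by rewrite cycDE /=; vs. Qed.
Lemma cycD_dd k : cycD (dd k) = if k == ord_max then c0 else dd (ordS k).
Proof.
by rewrite cycDE /=; vs; rewrite ?ordS_eq0.
Qed.
Lemma cycD_cc i : i != ord0 -> cycD (cc i) = cc i.
Proof. by move=> ni; rewrite cycDE /=; vs; rewrite (negbTE ni). Qed.
Lemma cycD_inl z : cycD (inl z) = inl z.
Proof. by rewrite cycDE /=; vs. Qed.

Lemma sj_delta i : sj (delta i) = delta (ordS i).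
Proof.
case: i => [[|k] hk]; rewrite sj_inr ?/delta //=.
  by rewrite cycD_c0; congr inr; congr inr; apply: ord_inj; rewrite inordK.
have km : k < m.+1 by [].
rewrite cycD_dd; case: eqP => [e|ne].
  have ek : k = m by move: e => /(congr1 (@nat_of_ord _)); rewrite /= inordK.
  by subst k; rewrite modnn.
have kl : k < m.
  rewrite ltn_neqAle -ltnS km andbT; apply/eqP=> ek; apply: ne; apply: ord_inj.
  by rewrite /= inordK // ek.
rewrite modn_small; last by rewrite !ltnS.
congr inr; congr inr; apply: ord_inj; rewrite /= !inordK ?modn_small //.
Qed.

Lemma delta_dd (k : 'I_m.+1) : delta (inord k.+1) = dd k.
Proof. by rewrite /delta inordK ?inord_val // ltnS. Qed.

Lemma sjK v : cycD ((sj ^+ m.+1) v) = v.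
Proof.
have Hd : forall i, cycD ((sj ^+ m.+1) (delta i)) = delta i.
  move=> i; rewrite (iter_on (d := delta) (f := @ordS _)); last exact: sj_delta.
  rewrite -sj_inr; last by case: (iter _ _ _) => [[|k] hk].
  by rewrite sj_delta -iterS iter_ordS_n.
case: v => [z|[i|k]].
- pose W : {set VV} := [set (inl z : VV) | z : vert Z].
  have H : (sj ^+ (n + 4)`!) (inl z) = inl z.
    apply: (orbit_fix (W := W)).
    + by rewrite imset_f.
    + by move=> u /imsetP[y _ ->]; rewrite sj_inl imset_f.
    + by rewrite card_inl leq_addr.
  by rewrite -mE in H; rewrite H cycD_inl.
- have [->|ni] := eqVneq i ord0; first exact: (Hd ord0).
  rewrite permX_fix ?cycD_cc //.
  by rewrite sj_inr // cycD_cc.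
- by rewrite -delta_dd Hd.
Qed.

Lemma comm_eq : cycC * cycD = tperm w cm1 * tperm w c0 * cycD * cycC.
Proof.
apply/permP => v.
rewrite (permM cycC cycD) (permM (tperm w cm1 * tperm w c0 * cycD) cycC).
rewrite (permM (tperm w cm1 * tperm w c0) cycD) (permM (tperm w cm1) (tperm w c0)).
rewrite !cycDE /cycC !(permE cycC_inj) /=.
case: v => [z|[i|k]] /=; vs.
- by [].
- have [eim|nim] := eqVneq i ord_max; vs; first by [].
  have [ei0|ni0] := eqVneq i ord0; vs; first by subst i.
  by rewrite (negbTE ni0).
- have [ekm|nkm] := eqVneq k ord_max; vs.
    by rewrite (eqP (_ : ordS (@ord_max K) == ord0)) // ordS_eq0.
  by rewrite (negbTE nkm); vs; rewrite (negbTE nkm).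
Qed.


Hypothesis Zconn : connected Z.
Hypothesis Zne : 0 < #|vert Z|.

Local Notation Gr := (<<[set sgm i | i : 'I_r]>>%G).

Lemma sgm_in i : sgm i \in Gr.
Proof. by apply: mem_gen; apply: imset_f. Qed.

Lemma s0_in : s0 \in Gr.
Proof. by have := sgm_in i0; rewrite /sgm eqxx. Qed.

Lemma sj_in : sj \in Gr.
Proof. by have := sgm_in j; rewrite /sgm (negbTE nij) eqxx. Qed.

Lemma cycC_in : cycC \in Gr.
Proof.
have H : s0 ^+ K * cycC = 1 by apply/permP => v; rewrite permM s0K perm1.
by rewrite -(mulKg (s0 ^+ K) cycC) H mulg1 groupV groupX // s0_in.
Qed.

Lemma cycD_in : cycD \in Gr.
Proof.
have H : sj ^+ m.+1 * cycD = 1 by apply/permP => v; rewrite permM sjK perm1.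
by rewrite -(mulKg (sj ^+ m.+1) cycD) H mulg1 groupV groupX // sj_in.
Qed.

Lemma Q_in : tperm w cm1 * tperm w c0 \in Gr.
Proof.
have -> : tperm w cm1 * tperm w c0 = cycC * cycD * cycC^-1 * cycD^-1.
  by rewrite comm_eq !mulgK.
by apply: groupM; [apply: groupM; [apply: groupM|]|]; rewrite ?groupV ?cycC_in ?cycD_in.
Qed.

Local Notation ccs t := (cc (iter t (@ordS _) ord0)).

Lemma cycCX t i : (cycC ^+ t) (cc i) = cc (iter t (@ordS _) i).
Proof. by apply: (iter_on (d := fun i => cc i)) => k; rewrite cycC_cc. Qed.

Lemma link_step t : tperm w (ccs t) * tperm w (ccs t.+1) \in Gr.
Proof.
have := Q_in; rewrite -(groupJr _ (groupX t.+1 cycC_in)) conjMg !tpermJ.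
rewrite permX_fix ?cycC_dd // !cycCX iterSr (eqP (_ : ordS (@ord_max K) == ord0)) //.
by rewrite ordS_eq0.
Qed.

Lemma link_all t : tperm w (ccs t) * tperm w c0 \in Gr.
Proof.
elim: t => [|t IH]; first by rewrite /= tperm2 group1.
have -> : tperm w (ccs t.+1) * tperm w c0 =
  (tperm w (ccs t) * tperm w (ccs t.+1))^-1 * (tperm w (ccs t) * tperm w c0).
  by rewrite invMg !tpermV -!mulgA (mulgA (tperm w (ccs t))) tperm2 mul1g.
by rewrite groupM ?groupV ?link_step.
Qed.

Lemma iter_ord0 (i : 'I_K.+1) : iter i (@ordS _) ord0 = i.
Proof. by apply: ord_inj; rewrite val_iter_ordS add0n modn_small. Qed.

Lemma sjX t i : (sj ^+ t) (delta i) = delta (iter t (@ordS _) i).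
Proof. by apply: iter_on; exact: sj_delta. Qed.

Lemma iter_ord0' (i : 'I_m.+2) : iter i (@ordS _) ord0 = i.
Proof. by apply: ord_inj; rewrite val_iter_ordS add0n modn_small. Qed.

Definition YY := gY sgm.

Lemma map_conn x y : connect (@adj r Z) x y -> connect (@adj r YY) (inl x) (inl y).
Proof.
move=> /connectP[p pth ->] {y}.
elim: p x pth => [|y p IH] x /=; first by rewrite connect0.
case/andP=> hxy /IH; apply: connect_trans; apply: connect1.
case/existsP: hxy => e /orP[]/andP[/eqP <- /eqP <-].
  by rewrite -sgm_ext; exact: gY_adj.
by rewrite gY_adj_sym -sgm_ext; exact: gY_adj.
Qed.

Lemma YY_conn : connected YY.
Proof.
have csym : connect_sym (@adj r YY) by apply: sym_connect_sym; exact: gY_adj_sym.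
suff H : forall v, connect (@adj r YY) c0 v.
  by move=> u v; apply: connect_trans (H v); rewrite csym.
have Hd : forall i, connect (@adj r YY) c0 (delta i).
  move=> i; rewrite -[in delta i](iter_ord0' i) -sjX.
  have -> : sj = sgm j by rewrite /sgm (negbTE nij) eqxx.
  exact: gY_conn_iter.
have He : connect (@adj r YY) c0 e0 by have := Hd (inord (nat_of_ord (@ord0 m)).+1); rewrite delta_dd.
case=> [z|[i|k]].
- apply: connect_trans He _; apply: connect_trans (_ : connect _ _ (inl a)) _.
    rewrite csym; apply: connect1; rewrite -s0_a.
    have -> : s0 = sgm i0 by rewrite /sgm eqxx.
    exact: gY_adj.
  exact: map_conn.
- have := gY_conn_iter (sig := sgm) c0 i0 i.
  rewrite /sgm eqxx (iter_on (d := fun i => cc i) (f := @ordS _)) ?iter_ord0 //.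
  exact: s0_cc.
- by rewrite -delta_dd.
Qed.


Lemma nmK : n + m <= K.
Proof.
have F1 := fact_gt0 (n + 4).
have eK : K = ((n + 5) * (n + 4)`!)%N by rewrite /K (addnS n 4) factS.
have hm : m <= (n + 4)`! by apply: leq_pred.
rewrite eK mulnDl; apply: leq_add; first exact: leq_pmulr. by apply: leq_trans hm _; apply: leq_pmull.
Qed.

Lemma main_constr : exists Y : lgraph r,
    [/\ connected Y, covering Y,
        (exists (f : vert Z -> vert Y) (g : edge Z -> edge Y), subgraph_emb f g) &
        exists sigma : 'I_r -> {perm vert Y},
          lifting_action sigma /\
          <<[set sigma i | i : 'I_r]>>%g = [set: {perm vert Y}]].
Proof.
exists YY; split.
- exact: YY_conn.
- exact: gY_cover.
- exists inl, (fun e => (inl (src e), lab e) : edge YY); split.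
  + by move=> x y [].
  + by move=> e1 e2 [h1 h2]; apply: Zimm.1.
  + by [].
  + by move=> e; rewrite /= sgm_ext.
  + by [].
exists sgm; split; first exact: gY_lift.
apply: (crit (G := Gr) (x0 := w) (y0 := c0) (U0 := w |: [set cc i | i : 'I_K.+1])).
- by [].
- move=> u; rewrite !inE => /orP[/eqP->|/imsetP[i _ ->]]; rewrite /lnk ?eqxx //.
  by rewrite -(iter_ord0 i) link_all orbT.
- rewrite !card_sum !card_ord cardsU1 card_imset; last by move=> x y [].
  have -> : w \notin [set cc i | i : 'I_K.+1] by apply/imsetP => [[i _]].
  rewrite ?cardsT card_ord /=.
  move: nmK; rewrite /n; move: (K) (m) => K1 m1; move: #|vert Z| => n1 /leP h; apply/leP; rewrite -!plusE -!multE in h *; lia.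
- by move=> v; apply: (gY_conn_trans YY_conn).
- by exists s0; [exact: s0_in | exact: s0_odd].
Qed.

End Constr.

Theorem lemma3p4 (r : nat) (hr : 2 <= r) (Z : lgraph r) :
  0 < #|vert Z| -> connected Z -> immersion Z -> ~ covering Z ->
  exists Y : lgraph r,
    [/\ connected Y, covering Y,
        (exists (f : vert Z -> vert Y) (g : edge Z -> edge Y), subgraph_emb f g) &
        exists sigma : 'I_r -> {perm vert Y},
          lifting_action sigma /\
          <<[set sigma i | i : 'I_r]>>%g = [set: {perm vert Y}]].
Proof.
move=> Zne Zconn Zimm ncov.
have [i0 [a pa]] := noncover Zimm ncov.
have h0 : 0 < r by apply: leq_trans hr.
pose j : 'I_r := if nat_of_ord i0 == 0 then Ordinal hr else Ordinal h0.
have nij : j != i0.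
  rewrite /j; case: (nat_of_ord i0 =P 0) => e; apply/negP => /eqP E; have e2 := congr1 (@nat_of_ord _) E; rewrite /= in e2.
    by rewrite -e2 in e.
  by apply: e; rewrite -e2.
exact: (main_constr Zimm pa nij Zconn).
Qed.
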